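(* Let $I\subset\mathbb{R}$ be an open interval, let $\bm{a}:I\to\mathbb{R}^2_1$ be a timelike frontal with Gauss mapping $\bm{\nu}:I\to S^1_1$, and let $r:I\to\mathbb{R}^+$ be a positive constant function. If $\bm{a}$ is not constant (i.e. its image is not a single point), then the pseudo-circle family $C_{(\bm{a}(t),-r(t))}$ does not create an envelope.
   Context: All objects are $C^\infty$. The Minkowski plane $\mathbb{R}^2_1$ is $\mathbb{R}^2$ with $\langle\bm{x},\bm{y}\rangle=-x_1y_1+x_2y_2$; $S^1_1=\{\bm{x}:\langle\bm{x},\bm{x}\rangle=1\}$. A smooth $\bm{a}:I\to\mathbb{R}^2_1$ is a timelike frontal if there is a smooth $\bm{\nu}:I\to S^1_1$ (Gauss mapping) with $\langle\frac{d\bm{a}}{dt}(t),\bm{\nu}(t)\rangle=0$ for all $t$. $C_{(\bm{a}(t),-r(t))}=\{\bm{x}\in\mathbb{R}^2_1:\langle\bm{x}-\bm{a}(t),\bm{x}-\bm{a}(t)\rangle=-r(t)^2\}$. An envelope of $C_{(\bm{a}(t),-r(t))}$ is a smooth $f:I\to\mathbb{R}^2_1$ with $f(t)\in C_{(\bm{a}(t),-r(t))}$ and $\langle\frac{df}{dt}(t),f(t)-\bm{a}(t)\rangle=0$ for all $t\in I$. *)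

(* Defs.v *)
From Stdlib Require Import Reals.
From Coquelicot Require Import Coquelicot.
Open Scope R_scope.

Definition mink (x y : R * R) : R := - fst x * fst y + snd x * snd y.

Definition vsub (x y : R * R) : R * R := (fst x - fst y, snd x - snd y).

Definition in_I (lo hi : Rbar) (t : R) : Prop := Rbar_lt lo t /\ Rbar_lt t hi.

Definition smooth_on (lo hi : Rbar) (f : R -> R) : Prop :=
  forall (n : nat) (t : R), in_I lo hi t -> ex_derive_n f n t.

Definition smooth_curve (lo hi : Rbar) (g : R -> R * R) : Prop :=
  smooth_on lo hi (fun s => fst (g s)) /\ smooth_on lo hi (fun s => snd (g s)).

Definition dcurve (g : R -> R * R) (t : R) : R * R :=
  (Derive (fun s => fst (g s)) t, Derive (fun s => snd (g s)) t).

Definition gauss_mapping (lo hi : Rbar) (a nu : R -> R * R) : Prop :=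
  smooth_curve lo hi nu /\
  forall t, in_I lo hi t -> mink (nu t) (nu t) = 1 /\ mink (dcurve a t) (nu t) = 0.

Definition timelike_frontal_with (lo hi : Rbar) (a nu : R -> R * R) : Prop :=
  smooth_curve lo hi a /\ gauss_mapping lo hi a nu.

Definition in_pseudo_circle (c : R * R) (rho : R) (x : R * R) : Prop :=
  mink (vsub x c) (vsub x c) = - rho ^ 2.

Definition is_envelope (lo hi : Rbar) (a : R -> R * R) (r : R -> R) (f : R -> R * R) : Prop :=
  smooth_curve lo hi f /\
  forall t, in_I lo hi t ->
    in_pseudo_circle (a t) (r t) (f t) /\ mink (dcurve f t) (vsub (f t) (a t)) = 0.

Definition creates_envelope (lo hi : Rbar) (a : R -> R * R) (r : R -> R) : Prop :=
  exists f : R -> R * R, is_envelope lo hi a r f.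

(* Main.v *)
Require Import Defs.
From Stdlib Require Import Reals Lra Psatz.
From Coquelicot Require Import Coquelicot.
Open Scope R_scope.
Lemma alg (p q n1 n2 g1 g2 : R) :
  - n1*n1 + n2*n2 = 1 -> - p*n1 + q*n2 = 0 -> -p*g1 + q*g2 = 0 ->
  - g1*g1 + g2*g2 < 0 -> p = 0 /\ q = 0.
Proof.
  intros H1 H2 H3 H4.
  assert (Hg : g1 <> 0) by (intro Z; subst; nra).
  set (k := n1/g1).
  assert (Hn1 : n1 = k*g1) by (unfold k; field; auto).
  assert (Hd : g1*n2 - g2*n1 <> 0).
  { intro E. assert (Hn2 : n2 = k*g2).
    { apply Rmult_eq_reg_l with g1; auto. rewrite Hn1 in E. nra. }
    rewrite Hn1, Hn2 in H1. nra. }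
  assert (Hq : q * (g1*n2 - g2*n1) = 0) by (replace (q * (g1*n2 - g2*n1)) with (g1*(-p*n1+q*n2) - n1*(-p*g1+q*g2)) by ring; rewrite H2, H3; ring).
  assert (q = 0) by (apply Rmult_integral in Hq; tauto).
  subst q. split; [|reflexivity]. apply Rmult_eq_reg_l with g1; auto. nra.
Qed.

Lemma in_I_between lo hi t1 t2 t :
  in_I lo hi t1 -> in_I lo hi t2 -> t1 <= t <= t2 -> in_I lo hi t.
Proof.
  intros [A B] [C D] [E F]; split.
  - destruct lo; simpl in *; auto; lra.
  - destruct hi; simpl in *; auto; lra.
Qed.

Lemma in_I_locally lo hi t : in_I lo hi t -> locally t (in_I lo hi).
Proof.
  intros Ht. apply (open_and (fun u : R => Rbar_lt lo u) (fun u : R => Rbar_lt u hi)).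
  - apply open_Rbar_gt.
  - apply open_Rbar_lt.
  - exact Ht.
Qed.

Lemma deriv_sq (u1 u2 v1 v2 : R -> R) t :
  ex_derive u1 t -> ex_derive u2 t -> ex_derive v1 t -> ex_derive v2 t ->
  is_derive (fun s => - (u1 s - v1 s) * (u1 s - v1 s) + (u2 s - v2 s) * (u2 s - v2 s)) t
   (2 * (- (u1 t - v1 t) * (Derive u1 t - Derive v1 t) + (u2 t - v2 t) * (Derive u2 t - Derive v2 t))).
Proof.
  intros H1 H2 H3 H4. auto_derive. repeat split; auto. change (fun x : R => u1 x) with u1; change (fun x : R => u2 x) with u2; change (fun x : R => v1 x) with v1; change (fun x : R => v2 x) with v2. ring.
Qed.

Theorem proposition2 (lo hi : Rbar) (a nu : R -> R * R) (r : R -> R) :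
  timelike_frontal_with lo hi a nu ->
  (exists c : R, 0 < c /\ forall t, in_I lo hi t -> r t = c) ->
  (exists t1 t2 : R, in_I lo hi t1 /\ in_I lo hi t2 /\ a t1 <> a t2) ->
  ~ creates_envelope lo hi a r.
Proof.
  intros [[Ha1 Ha2] [Hnu Hmain]] [c [Hc Hr]] [t1 [t2 [It1 [It2 Hne]]]] [f [[Hf1 Hf2] Henv]].
  assert (Key : forall t, in_I lo hi t ->
    Derive (fun s => fst (a s)) t = 0 /\ Derive (fun s => snd (a s)) t = 0).
  { intros t It.
    pose proof (Ha1 1%nat t It) as Ea1. pose proof (Ha2 1%nat t It) as Ea2.
    pose proof (Hf1 1%nat t It) as Ef1. pose proof (Hf2 1%nat t It) as Ef2.
    simpl in Ea1, Ea2, Ef1, Ef2.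
    pose proof (deriv_sq _ _ _ _ t Ef1 Ef2 Ea1 Ea2) as D.
    assert (D0 : Derive (fun s => - (fst (f s) - fst (a s)) * (fst (f s) - fst (a s)) + (snd (f s) - snd (a s)) * (snd (f s) - snd (a s))) t = 0).
    { rewrite (Derive_ext_loc _ (fun _ => - c ^ 2)).
      - apply Derive_const.
      - apply (filter_imp (in_I lo hi)); [|apply in_I_locally; auto].
        intros s Is. destruct (Henv s Is) as [P _]. unfold in_pseudo_circle, mink, vsub in P.
        simpl in P. rewrite (Hr s Is) in P. nra. }
    pose proof (eq_trans (eq_sym (is_derive_unique _ _ _ D)) D0) as D1. clear D D0.
    destruct (Henv t It) as [P Q]. destruct (Hmain t It) as [N M].
    unfold in_pseudo_circle, mink, vsub, dcurve in P, Q, N, M. simpl in P, Q, N, M. cbv beta in D1.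
    rewrite (Hr t It) in P.
    apply (alg _ _ (fst (nu t)) (snd (nu t)) (fst (f t) - fst (a t)) (snd (f t) - snd (a t))).
    - lra.
    - lra.
    - nra.
    - nra. }
  apply Hne.
  assert (Hc1 : forall u v, in_I lo hi u -> in_I lo hi v -> u < v -> a u = a v).
  { intros u v Iu Iv Huv.
    assert (Z : forall g : R -> R, (forall t, in_I lo hi t -> ex_derive g t /\ Derive g t = 0) -> g u = g v).
    { intros g Hg. apply (eq_is_derive g u v); auto.
      intros t Ht. destruct (Hg t (in_I_between lo hi u v t Iu Iv Ht)) as [E1 E2].
      pose proof (Derive_correct _ _ E1) as C. rewrite E2 in C. exact C. }
    rewrite (surjective_pairing (a u)), (surjective_pairing (a v)).
    f_equal; [apply (Z (fun s => fst (a s)))|apply (Z (fun s => snd (a s)))]; intros t It; split; try apply (Key t It).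
    - exact (Ha1 1%nat t It).
    - exact (Ha2 1%nat t It). }
  destruct (Rtotal_order t1 t2) as [L|[E|G]].
  - apply Hc1; auto.
  - subst; reflexivity.
  - symmetry; apply Hc1; auto.
Qed.
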